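(* Let $a,b,k$ be integers with $4k^2 < a < b-k$. Let $G$ be a graph obtained from the complete bipartite graph $K_{a,b}$ by removing the edges of $k$ forests (each a subgraph of $K_{a,b}$). Then $G$ contains a matching of size $a-k$. *)

(* Defs.v *)
From mathcomp Require Import all_boot.
Set Implicit Arguments. Unset Strict Implicit. Unset Printing Implicit Defensive.

(* A bipartite graph between parts 'I_a and 'I_b is given by its edge set
   E : {set 'I_a * 'I_b} (a subgraph of K_{a,b}). *)

Definition badj (a b : nat) (E : {set 'I_a * 'I_b}) : rel ('I_a + 'I_b) :=
  fun u v =>
    match u, v with
    | inl i, inr j => (i, j) \in E
    | inr j, inl i => (i, j) \in E
    | _, _ => false
    end.

Definition is_forest (a b : nat) (E : {set 'I_a * 'I_b}) : Prop :=
  forall s : seq ('I_a + 'I_b), uniq s -> 2 < size s -> ~~ cycle (badj E) s.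

Definition is_matching (a b : nat) (M : {set 'I_a * 'I_b}) : Prop :=
  forall e1 e2, e1 \in M -> e2 \in M ->
    (e1.1 = e2.1 -> e1 = e2) /\ (e1.2 = e2.2 -> e1 = e2).

Definition remove_forests (a b k : nat) (F : 'I_k -> {set 'I_a * 'I_b})
  : {set 'I_a * 'I_b} :=
  [set e | [forall i, e \notin F i]].

(* Main.v *)
Require Import Defs.
From mathcomp Require Import all_boot zify.
Set Implicit Arguments. Unset Strict Implicit. Unset Printing Implicit Defensive.

Section Forest.
Variables (a b : nat) (E : {set 'I_a * 'I_b}).
Local Notation T := ('I_a + 'I_b)%type.

Lemma badj_sym (u v : T) : badj E u v = badj E v u.
Proof. by case: u; case: v. Qed.

Lemma badj_irr (u : T) : badj E u u = false.
Proof. by case: u. Qed.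

Lemma cycle_ext (V : {set T}) :
  (forall v, v \in V -> exists w1 w2, [/\ w1 \in V, w2 \in V, w1 != w2,
       badj E v w1 & badj E v w2]) ->
  forall N x q, #|{: T}| <= N + size q -> x \in V -> path (badj E) x q -> uniq (x :: q) ->
  exists s, [/\ uniq s, 2 < size s & cycle (badj E) s].
Proof.
move=> HV; elim=> [|N IH] x q Hsz xV Hp Hu.
- have : size (x :: q) <= #|{: T}|.
    by rewrite -(card_uniqP Hu) max_card.
  by rewrite /=; lia.
have [w1 [w2 [w1V w2V w12 a1 a2]]] := HV x xV.
case: (boolP (w1 \in x :: q)) => i1; last first.
  apply: (IH w1 (x :: q)) => //=; first by lia.
  by rewrite badj_sym a1.
  by rewrite i1.
case: (boolP (w2 \in x :: q)) => i2; last first.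
  apply: (IH w2 (x :: q)) => //=; first by lia.
  by rewrite badj_sym a2.
  by rewrite i2.
case: q Hsz Hp Hu i1 i2 => [|y q'] Hsz Hp Hu i1 i2.
  by move: i1; rewrite mem_seq1 => /eqP E1; move: a1; rewrite E1 badj_irr.
have [w [wq wy wa]] : exists w, [/\ w \in q', w != y & badj E x w].
  have nx : forall w, badj E x w -> w \in x :: y :: q' -> w != y -> w \in q'.
    move=> w aw; rewrite !in_cons => /orP[/eqP ex|/orP[->//|//]].
      by move: aw; rewrite ex badj_irr.
  case: (eqVneq w1 y) => [e1|n1].
    have n2 : w2 != y by rewrite -e1 eq_sym.
    by exists w2; split => //; apply: nx.
  by exists w1; split => //; apply: nx.
case/splitPr: wq Hp Hu => q1 q2 Hp Hu.
exists (x :: y :: rcons q1 w); split.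
- move: Hu; rewrite -cat_rcons -cat_cons -cat_cons.
  by rewrite cat_uniq => /andP[].
- by rewrite /= size_rcons.
- rewrite /cycle -rcons_cons rcons_path last_rcons badj_sym wa andbT.
  by move: Hp; rewrite -cat_rcons -cat_cons cat_path => /andP[].
Qed.
End Forest.

Section Forest2.
Variables (a b : nat) (E : {set 'I_a * 'I_b}).
Local Notation T := ('I_a + 'I_b)%type.

Definition eV (V : {set T}) := [set e in E | (inl e.1 \in V) && (inr e.2 \in V)].

Lemma forest_edges : is_forest E -> forall n (V : {set T}), #|V| = n -> #|eV V| <= n.
Proof.
move=> HF; elim=> [|n IH] V HV.
  move/eqP: HV; rewrite cards_eq0 => /eqP ->.
  rewrite leqn0 cards_eq0; apply/eqP/setP => e; rewrite !inE.
  by case: (e \in E).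
case: (boolP [exists v in V, [forall w1 in V, forall w2 in V,
     (badj E v w1 && badj E v w2) ==> (w1 == w2)]]).
- case/exists_inP => v vV /forall_inP H1.
  have HD : #|V :\ v| = n by move: HV; rewrite (cardsD1 v) vV add1n => -[].
  pose I := [set e in eV V | (inl e.1 == v) || (inr e.2 == v)].
  have sub : eV V \subset eV (V :\ v) :|: I.
    apply/subsetP => e eE; rewrite /I /eV !inE.
    move: (eE); rewrite /eV !inE => /andP[-> /andP[e1 e2]] /=.
    rewrite e1 e2 !andbT /=.
    by case: (inl e.1 =P v); case: (inr e.2 =P v).
  have cI : #|I| <= 1.
    rewrite /I; clear I HD sub; apply/card_le1_eqP => e e'; rewrite /I /eV !inE.
    move=> /andP[/andP[eE /andP[e1 e2]] h] /andP[/andP[eE' /andP[e1' e2']] h'].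
    case: v vV H1 h h' => [x|y] vV H1 h h'.
    + have ex : e.1 = x.
        by move: h; case: (inl e.1 =P inl x) => [[]//|_] /= /eqP.
      have ex' : e'.1 = x.
        by move: h'; case: (inl e'.1 =P inl x) => [[]//|_] /= /eqP.
      subst x.
      have := H1 _ e2 => /forall_inP /(_ _ e2') /implyP.
      rewrite /= -{2}ex' -!surjective_pairing eE eE' => /(_ isT) /eqP [] h2.
      by case: e e' ex' h2 {eE eE' e1 e2 e1' e2' h h' vV H1} => x1 y1 [x2 y2] /= -> ->.
    + have ex : e.2 = y.
        by move: h; case: (inr e.2 =P inr y) => [[]//|_]; rewrite orbF => /eqP.
      have ex' : e'.2 = y.
        by move: h'; case: (inr e'.2 =P inr y) => [[]//|_]; rewrite orbF => /eqP.
      subst y.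
      have := H1 _ e1 => /forall_inP /(_ _ e1') /implyP.
      rewrite /= -{2}ex' -!surjective_pairing eE eE' => /(_ isT) /eqP [] h2.
      by case: e e' ex' h2 {eE eE' e1 e2 e1' e2' h h' vV H1} => x1 y1 [x2 y2] /= -> ->.
  apply: (leq_trans (subset_leq_card sub)).
  apply: (leq_trans (leq_card_setU _ _)).
  by have := IH _ HD; lia.
- rewrite negb_exists_in => /forall_inP H.
  exfalso.
  have [x xV] : exists x, x \in V.
    by apply/set0Pn; rewrite -card_gt0 HV.
  have HV' : forall v, v \in V -> exists w1 w2, [/\ w1 \in V, w2 \in V, w1 != w2,
       badj E v w1 & badj E v w2].
    move=> v vV; have := H v vV; rewrite negb_forall_in => /exists_inP [w1 w1V].
    rewrite negb_forall_in => /exists_inP [w2 w2V]; rewrite negb_imply => /andP[/andP[h1 h2] ne].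
    by exists w1, w2.
  have Hsz : #|{: T}| <= #|{: T}| + size (@nil T) by rewrite addn0.
  have [s [us ss cs]] := @cycle_ext a b E V HV' _ x [::] Hsz xV isT isT.
  by move: (HF s us ss); rewrite cs.
Qed.
End Forest2.

Lemma forest_row (a b : nat) (E : {set 'I_a * 'I_b}) (L : {set 'I_a}) :
  is_forest E -> #|[set e in E | e.1 \in L]| <= #|L| + b.
Proof.
move=> HF.
pose V : {set 'I_a + 'I_b} := [set v | if v is inl x then x \in L else true].
have h1 : [set e in E | e.1 \in L] \subset eV E V.
  apply/subsetP => e; rewrite /eV !inE => /andP[-> ->]; by [].
have h2 : V \subset [set inl x | x in L] :|: [set inr y | y in 'I_b].
  apply/subsetP => v; rewrite !inE; case: v => [x|y] h.
  - by apply/orP; left; apply/imsetP; exists x.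
  - by apply/orP; right; apply/imsetP; exists y.
apply: (leq_trans (subset_leq_card h1)).
apply: (leq_trans (forest_edges HF (erefl _))).
apply: (leq_trans (subset_leq_card h2)).
apply: (leq_trans (leq_card_setU _ _)).
apply: leq_add; first exact: leq_imset_card.
by apply: (leq_trans (leq_imset_card _ _)); rewrite card_ord.
Qed.

Lemma sumb (T : finType) (A : {set T}) : \sum_x ((x \in A) : nat) = #|A|.
Proof. rewrite -sum1_card [RHS]big_mkcond /=; apply: eq_bigr => x _; by case: (x \in A). Qed.

Lemma card_bigcup_le (T : finType) k (X : 'I_k -> {set T}) :
  #|\bigcup_i X i| <= \sum_i #|X i|.
Proof.
elim/big_rec2: _ => [|i A n _ IH]; first by rewrite cards0.
by apply: (leq_trans (leq_card_setU _ _)); rewrite leq_add2l.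
Qed.

Lemma low_bound (a b k : nat) (F : 'I_k -> {set 'I_a * 'I_b}) :
  4 * k ^ 2 < a -> a + k < b -> (forall i, is_forest (F i)) ->
  forall c, c + k < a ->
  #|[set x | #|[set y | (x, y) \in remove_forests F]| <= c]| <= k + c.
Proof.
move=> ha hb HF c hc.
set G := remove_forests F.
set L := [set x | _].
rewrite leqNgt; apply/negP => hL.
pose P := [set e : 'I_a * 'I_b | (e.1 \in L) && (e \notin G)].
have up : #|P| <= k * (#|L| + b).
  have sub : P \subset \bigcup_i [set e in F i | e.1 \in L].
    apply/subsetP => e; rewrite [e \in P]inE => /andP[eL].
    rewrite /G inE negb_forall => /existsP [i]; rewrite negbK => ei.
    by apply/bigcupP; exists i => //; move: eL; rewrite !inE ei.
  apply: (leq_trans (subset_leq_card sub)).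
  apply: (leq_trans (card_bigcup_le _)).
  have hs : \sum_(i < k) #|[set e in F i | e.1 \in L]| <= \sum_(i < k) (#|L| + b).
    by apply: leq_sum => i _; apply: forest_row.
  apply: (leq_trans hs).
  by rewrite sum_nat_const card_ord.
have low : #|L| * (b - c) <= #|P|.
  have -> : #|P| = \sum_x \sum_y (((x, y) \in P) : nat).
    by rewrite -sumb pair_bigA /=; apply: eq_bigr => -[x y] _.
  rewrite -sumb big_distrl /=.
  apply: leq_sum => x _.
  case xL: (x \in L); last by rewrite mul0n.
  rewrite mul1n.
  have -> : \sum_y (((x, y) \in P) : nat) = #|~: [set y | (x, y) \in G]|.
    rewrite -sumb; apply: eq_bigr => y _; rewrite [_ \in P]inE /= xL; by rewrite !inE.
  have := cardsC [set y | (x, y) \in G]; rewrite card_ord.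
  have hx : #|[set y | (x, y) \in G]| <= c by move: xL; rewrite inE.
  lia.
have : #|L| * (b - c) <= k * (#|L| + b) by apply: (leq_trans low).
have hbc : b - c = (b - c - k) + k by lia.
have : (k + c + 1) * (b - c - k) <= #|L| * (b - c - k) by apply: leq_mul => //; lia.
nia.
Qed.

Lemma greedy (a b : nat) (G : {set 'I_a * 'I_b}) (s : seq 'I_a) :
  uniq s -> (forall x, x \in s -> index x s < #|[set y | (x, y) \in G]|) ->
  exists M : {set 'I_a * 'I_b},
    [/\ M \subset G, is_matching M, #|M| = size s & forall e, e \in M -> e.1 \in s].
Proof.
elim/last_ind: s => [|s x IH].
  move=> _ _; exists set0; split => //; first exact: sub0set.
  - by move=> e1 e2; rewrite inE.
  - by rewrite cards0.
  - by move=> e; rewrite inE.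
rewrite rcons_uniq => /andP[xs us] H.
have [M [MG Mm Mc Ms]] : exists M : {set 'I_a * 'I_b},
    [/\ M \subset G, is_matching M, #|M| = size s & forall e, e \in M -> e.1 \in s].
  apply: IH => // y ys.
  have := H y; rewrite mem_rcons in_cons ys orbT => /(_ isT).
  by rewrite -cats1 index_cat ys.
have hx : size s < #|[set y | (x, y) \in G]|.
  have := H x; rewrite mem_rcons in_cons eqxx => /(_ isT).
  by rewrite -cats1 index_cat (negPf xs) /= eqxx addn0.
have : ~~ ([set y | (x, y) \in G] \subset [set e.2 | e in M]).
  apply/negP => /subset_leq_card h.
  have := leq_trans h (leq_imset_card _ M); rewrite Mc; lia.
case/subsetPn => y; rewrite inE => xyG yM.
have xyM : (x, y) \notin M by apply/negP => /Ms /= /(negP xs).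
exists ((x, y) |: M); split.
- by apply/subsetP => e; rewrite !inE => /orP[/eqP ->//|/(subsetP MG)].
- move=> e1 e2; rewrite !inE => /orP[/eqP ->|h1] /orP[/eqP ->|h2] //.
  + split=> /= h; exfalso.
      by move: xs; rewrite h Ms.
    by move/negP: yM; apply; apply/imsetP; exists e2.
  + split=> /= h; exfalso.
      by move: xs; rewrite -h Ms.
    by move/negP: yM; apply; apply/imsetP; exists e1.
  + exact: Mm.
- by rewrite cardsU1 xyM Mc size_rcons.
- move=> e; rewrite !inE mem_rcons in_cons => /orP[/eqP -> /=|/Ms ->]; first by rewrite eqxx.
  by rewrite orbT.
Qed.

Theorem claim10 (a b k : nat) (F : 'I_k -> {set 'I_a * 'I_b}) :
  4 * k ^ 2 < a -> a + k < b ->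
  (forall i, is_forest (F i)) ->
  exists M : {set 'I_a * 'I_b},
    [/\ M \subset remove_forests F, is_matching M & #|M| = a - k].
Proof.
move=> ha hb HF.
set G := remove_forests F.
pose f x := #|[set y | (x, y) \in G]|.
pose r := fun x y => f x <= f y.
have rt : transitive r by move=> x y z; apply: leq_trans.
have rr : reflexive r by move=> x; apply: leqnn.
have rtot : total r by move=> x y; apply: leq_total.
pose t := sort r (enum 'I_a).
have st : sorted r t := sort_sorted rtot _.
have ut : uniq t by rewrite sort_uniq enum_uniq.
have szt : size t = a by rewrite size_sort size_enum_ord.
pose s := drop k t.
have us : uniq s := drop_uniq _ ut.
have szs : size s = a - k by rewrite size_drop szt.
have H : forall x, x \in s -> index x s < f x.
  move=> x xs; set j := index x s.
  have js : j < a - k by rewrite -szs index_mem.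
  have xt0 : nth x s j = x by rewrite nth_index.
  clearbody j.
  have xt : nth x t (k + j) = x by rewrite -nth_drop.
  move: xt0 => _.
  rewrite ltnNge; apply/negP => fx.
  have sub : {subset take (k + j + 1) t <= [set z | f z <= j]}.
    move=> z zt; rewrite inE.
    have iz : index z (take (k + j + 1) t) < k + j + 1.
      by move: (index_mem z (take (k + j + 1) t)); rewrite zt size_take szt; case: ifP; lia.
    have ez : nth x t (index z (take (k + j + 1) t)) = z.
      by rewrite -(nth_take x iz) nth_index.
    apply: leq_trans fx; rewrite -{1}xt -{1}ez.
    apply: (sorted_leq_nth rt rr) => //; rewrite ?unfold_in /= ?szt.
    + by apply: (leq_trans iz); lia.
    + lia.
    + by move: iz; rewrite addn1 ltnS.
  have cu : #|take (k + j + 1) t| = k + j + 1.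
    by rewrite (card_uniqP (take_uniq _ ut)) size_take szt; case: ifP; lia.
  have jk : j + k < a by lia.
  have lb := @low_bound a b k F ha hb HF j jk.
  have sl : #|take (k + j + 1) t| <= #|[set z | f z <= j]|.
    by apply: subset_leq_card; apply/subsetP.
  move: sl; rewrite cu; move: lb; rewrite /f /G; lia.
have [M [MG Mm Mc _]] := greedy us H.
by exists M; split => //; rewrite Mc szs.
Qed.
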